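(* Let $d=n\ge2$ and let $P_1,\dots,P_d$ be real quadratic forms on $\mathbb{R}^d$ such that $\det[\nabla P_1(t);\dots;\nabla P_d(t)]\not\equiv0$ as a polynomial in $t$. Let $V\subset\mathbb{R}^{2d}$ be a linear subspace. (1) If $\dim V$ is odd, then $\{t:\dim(\pi_t(V))<(\dim V+1)/2\}$ is contained in the zero set of a nonzero polynomial of degree at most $d$. (2) If $\dim V$ is even, then either $\{t:\dim(\pi_t(V))<\dim V/2+1\}$ is contained in the zero set of a nonzero polynomial of degree at most $d$, or $\dim(\pi_t(V))\ge\dim V/2$ for all $t\in\mathbb{R}^d$.
   Context: For $t\in\mathbb{R}^d$, $V(t)\subset\mathbb{R}^{2d}$ is the linear subspace spanned by $(e_j,\partial_jP_1(t),\dots,\partial_jP_d(t))$, $j=1,\dots,d$, and $\pi_t$ is the orthogonal projection onto $V(t)$. *)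

(* Defs.v *)
From HB Require Import structures.
From mathcomp Require Import all_boot all_order all_algebra.
Set Implicit Arguments. Unset Strict Implicit. Unset Printing Implicit Defensive.
Import Order.TTheory GRing.Theory Num.Theory.
Local Open Scope ring_scope.

(* Real polynomials of degree at most [k] in [d] variables, represented by
   their coefficient functions: a coefficient for each exponent vector
   a : 'I_d -> {0..k} ; coefficients of monomials of total degree > k vanish. *)
Definition mexp (d k : nat) := {ffun 'I_d -> 'I_k.+1}.

Definition mdeg d k (a : mexp d k) : nat := (\sum_(i < d) (a i : nat))%N.

Definition mpoly_deg_le (R : ringType) d k (c : {ffun mexp d k -> R}) : Prop :=
  forall a : mexp d k, (k < mdeg a)%N -> c a = 0.

Definition meval (R : comRingType) d k (c : {ffun mexp d k -> R}) (t : 'rV[R]_d) : R :=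
  \sum_(a : mexp d k) c a * \prod_(i < d) t 0 i ^+ (a i : nat).

Definition qform (R : ringType) d (A : 'M[R]_d) (t : 'rV[R]_d) : R :=
  (t *m A *m t^T) 0 0.

(* partial derivative d_j P(t) of P(t) = t A t^T : ((A + A^T) t^T)_j *)
Definition dqform (R : ringType) d (A : 'M[R]_d) (t : 'rV[R]_d) (j : 'I_d) : R :=
  (t *m (A + A^T)) 0 j.

Definition jacq (R : ringType) d (A : 'I_d -> 'M[R]_d) (t : 'rV[R]_d) : 'M[R]_d :=
  \matrix_(i < d, j < d) dqform (A i) t j.

(* Matrix whose j-th row is (e_j, d_j P_1(t), ..., d_j P_d(t)) in R^{2d};
   its row space is V(t). *)
Definition Vt (R : ringType) d (A : 'I_d -> 'M[R]_d) (t : 'rV[R]_d) : 'M[R]_(d, d + d) :=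
  row_mx 1%:M (\matrix_(j < d, i < d) dqform (A i) t j).

(* Orthogonal projection pi_t onto V(t) (acting on row vectors by right
   multiplication): projection onto V(t) along its orthogonal complement
   V(t)^perp = {u | u *m (Vt t)^T = 0} = row space of kermx (Vt t)^T. *)
Definition pit (R : fieldType) d (A : 'I_d -> 'M[R]_d) (t : 'rV[R]_d) : 'M[R]_(d + d) :=
  proj_mx (<<Vt A t>>)%MS (kermx (Vt A t)^T).

Definition dim_proj (R : fieldType) d (A : 'I_d -> 'M[R]_d) m (V : 'M[R]_(m, d + d))
  (t : 'rV[R]_d) : nat := \rank (V *m pit A t).

(* Main.v *)
Require Import Defs.
From HB Require Import structures.
From mathcomp Require Import all_boot all_order all_algebra.
From mathcomp Require Import zify perm.
From Stdlib Require Import Classical.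
Set Implicit Arguments. Unset Strict Implicit. Unset Printing Implicit Defensive.
Import Order.TTheory GRing.Theory Num.Theory.
Local Open Scope ring_scope.

Section Poly.
Variables (R : comRingType) (d : nat).

Definition polyle k (f : 'rV[R]_d -> R) :=
  exists c : {ffun mexp d k -> R}, mpoly_deg_le c /\ forall t, meval c t = f t.

Lemma polyle_ext k f g : (forall t, f t = g t) -> polyle k f -> polyle k g.
Proof. by move=> H [c [H1 H2]]; exists c; split => // t; rewrite H2. Qed.

Lemma polyle_const k r : polyle k (fun _ => r).
Proof.
pose a0 : mexp d k := [ffun _ => ord0].
exists [ffun a => if a == a0 then r else 0]; split.
- move=> a; rewrite ffunE; case: eqP => // ->.
  by rewrite /mdeg big1 // => i _; rewrite ffunE.
- move=> t; rewrite /meval (bigD1 a0) //= [X in _ + X]big1; last first.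
    by move=> a Ha; rewrite ffunE (negbTE Ha) mul0r.
  rewrite ffunE eqxx big1 ?mulr1 ?addr0 // => i _.
  by rewrite ffunE expr0.
Qed.

Lemma polyle_add k f g : polyle k f -> polyle k g -> polyle k (fun t => f t + g t).
Proof.
move=> [c1 [D1 E1]] [c2 [D2 E2]].
exists [ffun a => c1 a + c2 a]; split.
- by move=> a Ha; rewrite ffunE D1 // D2 // addr0.
- move=> t; rewrite -E1 -E2 /meval -big_split; apply: eq_bigr => a _.
  by rewrite ffunE mulrDl.
Qed.

Lemma polyle_coord i : polyle 1 (fun t => t 0 i).
Proof.
pose e : mexp d 1 := [ffun j => inord (j == i)].
have eE j : (e j : nat) = (j == i) by rewrite ffunE inordK // ltnS leq_b1.
exists [ffun a => (a == e)%:R]; split.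
- move=> a; rewrite ffunE; case: eqP => // -> .
  rewrite /mdeg (bigD1 i) //= big1; last by move=> j Hj; rewrite eE (negbTE Hj).
  by rewrite eE eqxx.
- move=> t; rewrite /meval (bigD1 e) //= [X in _ + X]big1; last first.
    by move=> a Ha; rewrite ffunE (negbTE Ha) mul0r.
  rewrite ffunE eqxx mul1r addr0 (bigD1 i) //= big1; last first.
    by move=> j Hj; rewrite eE (negbTE Hj) expr0.
  by rewrite eE eqxx expr1 mulr1.
Qed.

Section Mul.
Variables k1 k2 : nat.
Definition addm (a1 : mexp d k1) (a2 : mexp d k2) : mexp d (k1 + k2) :=
  [ffun i => inord (a1 i + a2 i)].
Lemma addmE a1 a2 i : (addm a1 a2 i : nat) = (a1 i + a2 i)%N.
Proof.
by rewrite ffunE inordK // ltnS leq_add // -ltnS ltn_ord.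
Qed.
Lemma mdeg_addm a1 a2 : mdeg (addm a1 a2) = (mdeg a1 + mdeg a2)%N.
Proof. by rewrite /mdeg -big_split; apply: eq_bigr => i _; rewrite addmE. Qed.

Lemma polyle_mul f g : polyle k1 f -> polyle k2 g -> polyle (k1 + k2) (fun t => f t * g t).
Proof.
move=> [c1 [D1 E1]] [c2 [D2 E2]].
exists [ffun a => \sum_(p : mexp d k1 * mexp d k2 | addm p.1 p.2 == a) c1 p.1 * c2 p.2].
split.
- move=> a Ha; rewrite ffunE big1 // => -[a1 a2] /= /eqP Ea.
  rewrite -Ea mdeg_addm in Ha.
  case: (ltnP k1 (mdeg a1)) => h1; first by rewrite D1 // mul0r.
  by rewrite D2 ?mulr0 //; lia.
- move=> t; rewrite -E1 -E2 /meval big_distrlr /= pair_big /=.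
  rewrite (partition_big (fun p : mexp d k1 * mexp d k2 => addm p.1 p.2) xpredT) //=.
  apply: eq_bigr => a _; rewrite ffunE mulr_suml; apply: eq_bigr => -[a1 a2] /= /eqP <-.
  rewrite mulrACA -big_split /=; congr (_ * _); apply: eq_bigr => i _.
  by rewrite addmE exprD.
Qed.
End Mul.

Lemma polyle_sum (I : Type) (r : seq I) (P : pred I) k (F : I -> 'rV[R]_d -> R) :
  (forall i, P i -> polyle k (F i)) -> polyle k (fun t => \sum_(i <- r | P i) F i t).
Proof.
move=> H; elim: r => [|a r IH].
  by apply: polyle_ext (polyle_const k 0) => t; rewrite big_nil.
case HP: (P a).
  apply: polyle_ext (polyle_add (H a HP) IH) => t; by rewrite big_cons HP.
by apply: polyle_ext IH => t; rewrite big_cons HP.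
Qed.

Lemma polyle_prod n (F : 'I_n -> 'rV[R]_d -> R) :
  (forall i, polyle 1 (F i)) -> polyle n (fun t => \prod_(i < n) F i t).
Proof.
elim: n F => [|n IH] F H.
  by apply: polyle_ext (polyle_const 0 1) => t; rewrite big_ord0.
apply: polyle_ext (polyle_mul (H ord0) (IH _ (fun i => H (lift ord0 i)))) => t.
by rewrite big_ord_recl.
Qed.

Lemma polyle_det (A : 'I_d -> 'M[R]_d) (t0 : 'rV[R]_d) :
  polyle d (fun t => \det (jacq A (t - t0))).
Proof.
rewrite /determinant; apply: polyle_sum => s _.
apply: (polyle_mul (polyle_const 0 _)).
apply: polyle_prod => i.
have H : polyle 1 (fun t => \sum_(l < d) (t 0 l + - t0 0 l) * (A i + (A i)^T) l ((s : {perm 'I_d}) i)).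
  apply: polyle_sum => l _.
  rewrite -[1%N]/(1 + 0)%N.
  apply: polyle_mul; last exact: polyle_const.
  apply: polyle_add; [exact: polyle_coord | exact: polyle_const].
apply: polyle_ext H => t.
by rewrite /jacq /dqform !mxE; apply: eq_bigr => l _; rewrite !mxE.
Qed.
End Poly.
Section LA.
Variables (R : rcfType) (d : nat) (A : 'I_d -> 'M[R]_d).

Lemma capUK m n (U : 'M[R]_(m, n)) : (<<U>> :&: kermx U^T = 0)%MS.
Proof.
apply/eqP/rowV0P => v; rewrite sub_capmx genmxE => /andP[/submxP[x ->] /sub_kermxP H].
have Hww : (x *m U) *m (x *m U)^T = 0 by rewrite trmx_mul mulmxA H mul0mx.
move: (x *m U) Hww => w Hww.
have Hs : \sum_j w 0 j ^+ 2 = 0.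
  have := congr1 (fun M : 'M[R]_1 => M 0 0) Hww; rewrite /= !mxE => Hs0.
  rewrite -[X in _ = X]Hs0; apply: eq_bigr => j _; by rewrite mxE expr2.
apply/rowP => j; rewrite mxE.
by apply/eqP; rewrite -sqrf_eq0; apply/eqP; apply: (psumr_eq0P _ Hs) => // i _; rewrite sqr_ge0.
Qed.

Lemma fullUK m n (U : 'M[R]_(m, n)) : row_full (<<U>> + kermx U^T)%MS.
Proof.
by rewrite /row_full mxrank_disjoint_sum ?capUK // genmxE mxrank_ker mxrank_tr subnKC ?rank_leq_col.
Qed.

Lemma kerP m n (U : 'M[R]_(m, n)) (w : 'rV_n) :
  w *m proj_mx <<U>>%MS (kermx U^T) = 0 -> (w <= kermx U^T)%MS.
Proof.
move=> H; have := proj_mx_compl_sub (submx_full w (fullUK U)); by rewrite H subr0.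
Qed.

Lemma kersub t : (kermx (pit A t) <= kermx (Vt A t)^T)%MS.
Proof. by apply/rV_subP => w /sub_kermxP; exact: kerP. Qed.

Lemma blockK (v : 'rV[R]_(d + d)) t : v *m (Vt A t)^T = lsubmx v + rsubmx v *m jacq A t.
Proof.
rewrite -{1}(hsubmxK v) /Vt tr_row_mx mul_row_col trmx1 mulmx1; congr (_ + _ *m _).
by apply/matrixP => i j; rewrite !mxE.
Qed.

Lemma jacqB t s : jacq A t - jacq A s = jacq A (t - s).
Proof. by apply/matrixP => i j; rewrite !mxE /dqform mulmxBl !mxE. Qed.

Lemma rank_cap m (V : 'M[R]_(m, d + d)) t :
  \rank (V :&: kermx (pit A t))%MS = (\rank V - dim_proj A V t)%N.
Proof. by rewrite /dim_proj -(mxrank_mul_ker V (pit A t)) addKn. Qed.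

Lemma key m (V : 'M[R]_(m, d + d)) t s :
  (\rank V < (\rank V - dim_proj A V t) + (\rank V - dim_proj A V s))%N ->
  \det (jacq A (t - s)) = 0.
Proof.
rewrite -!rank_cap => H.
set Wt := (V :&: kermx (pit A t))%MS; set Ws := (V :&: kermx (pit A s))%MS.
have Hle : (\rank (Wt + Ws) <= \rank V)%N.
  by apply: mxrankS; rewrite addsmx_sub !capmxSl.
have Hc : (Wt :&: Ws)%MS != 0.
  rewrite -mxrank_eq0; move: H Hle (mxrank_sum_cap Wt Ws); rewrite /Wt /Ws; lia.
case/rowV0Pn: Hc => v; rewrite sub_capmx => /andP[Hvt Hvs] Hv0.
have Kt : v *m (Vt A t)^T = 0.
  apply/sub_kermxP; apply: submx_trans (kersub t); exact: submx_trans Hvt (capmxSr _ _).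
have Ks : v *m (Vt A s)^T = 0.
  apply/sub_kermxP; apply: submx_trans (kersub s); exact: submx_trans Hvs (capmxSr _ _).
rewrite blockK in Kt; rewrite blockK in Ks.
apply/eqP/det0P; exists (rsubmx v).
  apply/eqP => Hy; move/eqP: Hv0; apply; rewrite -(hsubmxK v) Hy.
  by move: Kt; rewrite Hy mul0mx addr0 => ->; rewrite row_mx0.
rewrite -jacqB mulmxBr.
have -> : rsubmx v *m jacq A t - rsubmx v *m jacq A s =
  (lsubmx v + rsubmx v *m jacq A t) - (lsubmx v + rsubmx v *m jacq A s).
  by rewrite opprD addrACA subrr add0r.
by rewrite Kt Ks subrr.
Qed.
End LA.

Lemma poly_c (R : rcfType) (d : nat) (A : 'I_d -> 'M[R]_d)
  (hdet : exists t : 'rV[R]_d, \det (jacq A t) != 0) (t0 : 'rV[R]_d) :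
  exists c : {ffun mexp d d -> R},
    [/\ c != 0, mpoly_deg_le c & forall t, meval c t = \det (jacq A (t - t0))].
Proof.
have [c [D E]] := polyle_det A t0.
exists c; split => //; apply/eqP => Hc.
case: hdet => t1; rewrite -(addrK t0 t1) -E Hc /meval big1 ?eqxx // => a _.
by rewrite ffunE mul0r.
Qed.

Theorem mainTheorem18 (R : rcfType) (d : nat) (hd : (2 <= d)%N)
  (A : 'I_d -> 'M[R]_d)
  (hdet : exists t : 'rV[R]_d, \det (jacq A t) != 0)
  (V : 'M[R]_(d + d)) :
  (odd (\rank V) ->
     exists c : {ffun mexp d d -> R}, [/\ c != 0, mpoly_deg_le c &
       forall t : 'rV[R]_d, (2 * dim_proj A V t < (\rank V).+1)%N -> meval c t = 0]) /\
  (~~ odd (\rank V) ->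
     (exists c : {ffun mexp d d -> R}, [/\ c != 0, mpoly_deg_le c &
       forall t : 'rV[R]_d, (2 * dim_proj A V t < (\rank V).+2)%N -> meval c t = 0])
     \/ (forall t : 'rV[R]_d, (\rank V <= 2 * dim_proj A V t)%N)).
Proof.
have Hp t : (dim_proj A V t <= \rank V)%N by exact: mxrankM_maxl.
split.
- move=> Hodd; have := odd_double_half (\rank V); rewrite Hodd -muln2 /= => Hr.
  case: (classic (exists t0, (2 * dim_proj A V t0 < (\rank V).+1)%N)) => [[t0 H0]|Hno].
  + have [c [Hc D E]] := poly_c hdet t0.
    exists c; split => // t Ht; rewrite E; apply: (@key _ _ _ _ V).
    move: (Hp t) (Hp t0) Hr Ht H0.
    lia.
  + have [c [Hc D E]] := poly_c hdet 0.
    exists c; split => // t Ht; exfalso; apply: Hno; by exists t.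
- move=> Hev; have := odd_double_half (\rank V); rewrite (negbTE Hev) add0n -muln2 => Hr.
  case: (classic (exists t0, (2 * dim_proj A V t0 < \rank V)%N)) => [[t0 H0]|Hno].
  + left; have [c [Hc D E]] := poly_c hdet t0.
    exists c; split => // t Ht; rewrite E; apply: (@key _ _ _ _ V).
    move: (Hp t) (Hp t0) Hr Ht H0; lia.
  + right => t; rewrite leqNgt; apply/negP => H; apply: Hno; by exists t.
Qed.
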